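(* For any $x\in\mathbb{R}^n$ and $0<\delta<2$, with $z=x-\delta(a_{i^*}^Tx-b_{i^*})^+a_{i^*}$ (where $i^*$ is selected at $x$), $$\mathbb{E}_{\mathbb{S}}[d(z,P)^2]\le\mathbb{E}_{\mathbb{S}}\big[\|x-\mathcal{P}(x)-\delta(a_{i^*}^Tx-b_{i^*})^+a_{i^*}\|^2\big]\le h(\delta)\,d(x,P)^2,$$ where $\eta=2\delta-\delta^2$ and $h(\delta)=1-\eta\mu_1<1$.
   Context: Let $A\in\mathbb{R}^{m\times n}$ have rows $a_1^T,\dots,a_m^T$ with $\|a_i\|_2=1$, and $b\in\mathbb{R}^m$; assume $Ax\le b$ is consistent and let $P=\{x:Ax\le b\}$, $\mathcal{P}(x)$ the Euclidean projection onto $P$, $d(x,P)=\|x-\mathcal{P}(x)\|$, $t^+=\max\{t,0\}$. Fix an integer $1\le\beta\le m$. Sampling distribution $\mathbb{S}$ at $x$: $\tau\subseteq\{1,\dots,m\}$ with $|\tau|=\beta$ uniformly at random, and $i^*\in\tau$ maximizing $(a_i^Tx-b_i)^+$ over $\tau$; $\mathbb{E}_{\mathbb{S}}$ is expectation over $\tau$. $L>0$ is a Hoffman constant ($d(x,P)^2\le L^2\|(Ax-b)^+\|^2$ for all $x$); $\mu_1=\frac1{mL^2}$. *)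

(* Defs.v *)
(* Vectors in R^n are row vectors 'rV[R]_n; A : 'M[R]_(m,n), b : 'cV[R]_m. *)
From mathcomp Require Import all_boot all_order all_algebra.
Set Implicit Arguments. Unset Strict Implicit. Unset Printing Implicit Defensive.
Import Order.TTheory GRing.Theory Num.Theory.
Local Open Scope ring_scope.

Definition dotv (R : realFieldType) (n : nat) (u v : 'rV[R]_n) : R :=
  \sum_(j < n) u 0 j * v 0 j.
Definition sqnorm (R : realFieldType) (n : nat) (u : 'rV[R]_n) : R := dotv u u.

Definition pospart (R : realFieldType) (t : R) : R := Num.max t 0.

Definition resid (R : realFieldType) (m n : nat) (A : 'M[R]_(m, n)) (b : 'cV[R]_m)
  (x : 'rV[R]_n) (i : 'I_m) : R := dotv (row i A) x - b i 0.

Definition inP (R : realFieldType) (m n : nat) (A : 'M[R]_(m, n)) (b : 'cV[R]_m)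
  (x : 'rV[R]_n) : Prop := forall i, resid A b x i <= 0.

Definition viol2 (R : realFieldType) (m n : nat) (A : 'M[R]_(m, n)) (b : 'cV[R]_m)
  (x : 'rV[R]_n) : R := \sum_(i < m) pospart (resid A b x i) ^+ 2.

Definition is_projection (R : realFieldType) (m n : nat) (A : 'M[R]_(m, n))
  (b : 'cV[R]_m) (proj : 'rV[R]_n -> 'rV[R]_n) : Prop :=
  forall x, inP A b (proj x) /\
    forall y, inP A b y -> sqnorm (x - proj x) <= sqnorm (x - y).

Definition dist2 (R : realFieldType) (n : nat) (proj : 'rV[R]_n -> 'rV[R]_n)
  (x : 'rV[R]_n) : R := sqnorm (x - proj x).

(* expectation over tau uniformly distributed among subsets of size beta *)
Definition Esamp (R : realFieldType) (m beta : nat) (f : {set 'I_m} -> R) : R :=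
  (\sum_(tau : {set 'I_m} | #|tau| == beta) f tau)
    / (#|[set tau : {set 'I_m} | #|tau| == beta]|)%:R.

Definition is_selection (R : realFieldType) (m n : nat) (A : 'M[R]_(m, n))
  (b : 'cV[R]_m) (beta : nat) (x : 'rV[R]_n) (sel : {set 'I_m} -> 'I_m) : Prop :=
  forall tau : {set 'I_m}, #|tau| = beta ->
    sel tau \in tau /\
    forall i, i \in tau -> pospart (resid A b x i) <= pospart (resid A b x (sel tau)).

(* Main.v *)
Require Import Defs.
From mathcomp Require Import all_boot all_order all_algebra all_fingroup.
From mathcomp Require Import ring lra.
Import Order.TTheory GRing.Theory Num.Theory.
Local Open Scope ring_scope.

Lemma sqnorm_sub_scale (R : realFieldType) n (u a : 'rV[R]_n) (c : R) :
  sqnorm (u - c *: a) = sqnorm u - 2 * c * dotv a u + c ^+ 2 * sqnorm a.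
Proof.
rewrite /sqnorm /dotv !mulr_sumr -sumrB -big_split /=.
by apply: eq_bigr => j _; rewrite !mxE; ring.
Qed.

Lemma dotvB (R : realFieldType) n (a u v : 'rV[R]_n) :
  dotv a (u - v) = dotv a u - dotv a v.
Proof.
rewrite /dotv -sumrB; apply: eq_bigr => j _; rewrite !mxE; ring.
Qed.

Definition Ncnt m beta (i : 'I_m) : nat :=
  (\sum_(tau : {set 'I_m} | #|tau| == beta) (i \in tau))%N.
Arguments Ncnt {m} beta i.
Lemma Ncnt_const m beta (i j : 'I_m) : Ncnt beta i = Ncnt beta j.
Proof.
have hinj : injective (fun tau : {set 'I_m} => tperm i j @^-1: tau).
  move=> t1 t2 /setP E; apply/setP => x.
  by have := E (tperm i j x); rewrite !inE tpermK.
have E := @reindex_inj nat addn 0%N _ _ (fun tau : {set 'I_m} => #|tau| == beta) (fun tau : {set 'I_m} => nat_of_bool (i \in tau)) hinj.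
rewrite /Ncnt E.
  apply: eq_big => tau.
    by rewrite card_preimset //; apply: perm_inj.
  by move=> _; rewrite inE tpermL.
Qed.

Lemma Ncnt_sum m beta :
  (\sum_(i < m) Ncnt beta i = beta * #|[set tau : {set 'I_m} | #|tau| == beta]|)%N.
Proof.
rewrite /Ncnt exchange_big /=.
transitivity (\sum_(tau : {set 'I_m} | #|tau| == beta) beta)%N; last first.
  by rewrite sum_nat_const cardsE mulnC.
apply: eq_bigr => tau /eqP <-.
  rewrite -sum1_card [RHS]big_mkcond /=; apply: eq_bigr => i _.
  by case: (i \in tau).
Qed.

Lemma sum_in_tau (R : realFieldType) m beta (g : 'I_m -> R) :
  \sum_(tau : {set 'I_m} | #|tau| == beta) \sum_(i in tau) g i
  = \sum_(i < m) g i * (Ncnt beta i)%:R.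
Proof.
transitivity (\sum_(tau : {set 'I_m} | #|tau| == beta) \sum_(i < m) if i \in tau then g i else 0).
  by apply: eq_bigr => tau _; rewrite [LHS]big_mkcond.
rewrite exchange_big /=; apply: eq_bigr => i _.
rewrite /Ncnt natr_sum mulr_sumr; apply: eq_bigr => tau _.
by case: (i \in tau); rewrite ?mulr1 ?mulr0.
Qed.

Lemma ltW_helper {R : realFieldType} {a b : R} : a <= b -> 0 <= b - a.
Proof. by rewrite subr_ge0. Qed.

Lemma pospart_ge0 (R : realFieldType) (t : R) : 0 <= pospart t.
Proof. by rewrite /pospart le_max lexx orbT. Qed.

Theorem lemma9 (R : realFieldType) (m n beta : nat)
  (A : 'M[R]_(m, n)) (b : 'cV[R]_m) (proj : 'rV[R]_n -> 'rV[R]_n) (L : R)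
  (x : 'rV[R]_n) (delta : R) (sel : {set 'I_m} -> 'I_m) :
  (forall i : 'I_m, sqnorm (row i A) = 1) ->
  (exists y : 'rV[R]_n, inP A b y) ->
  is_projection A b proj ->
  (1 <= beta)%N -> (beta <= m)%N ->
  0 < L ->
  (forall y : 'rV[R]_n, dist2 proj y <= L ^+ 2 * viol2 A b y) ->
  0 < delta -> delta < 2 ->
  is_selection A b beta x sel ->
  let zstep := fun tau : {set 'I_m} =>
    (delta * pospart (resid A b x (sel tau))) *: row (sel tau) A in
  let h := 1 - (2 * delta - delta ^+ 2) * (1 / (m%:R * L ^+ 2)) in
  Esamp beta (fun tau => dist2 proj (x - zstep tau))
    <= Esamp beta (fun tau => sqnorm (x - proj x - zstep tau))
  /\ Esamp beta (fun tau => sqnorm (x - proj x - zstep tau)) <= h * dist2 proj x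
  /\ h < 1.
Proof.
move=> HA _ Hproj Hb1 Hbm HL Hhoff Hd0 Hd2 Hsel zstep h.
have m0 : (0 < m)%N by apply: leq_trans Hb1 Hbm.
pose i0 : 'I_m := Ordinal m0.
pose C := #|[set tau : {set 'I_m} | #|tau| == beta]|.
have Cpos : (0 < C)%N by rewrite /C card_draws card_ord bin_gt0.
have CposR : 0 < (C%:R : R) by rewrite ltr0n.
have mR : 0 < (m%:R : R) by rewrite ltr0n.
have bR : 0 < (beta%:R : R) by rewrite ltr0n.
have eta0 : 0 <= 2 * delta - delta ^+ 2 by rewrite expr2; nra.
have eta1 : 0 < 2 * delta - delta ^+ 2 by rewrite expr2; nra.
have kpos : 0 < 1 / (m%:R * L ^+ 2) by rewrite divr_gt0 // mulr_gt0 // exprn_gt0.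
split.
  rewrite /Esamp; apply: ler_wpM2r; first by rewrite invr_ge0 ler0n.
  apply: ler_sum => tau _.
  have -> : x - proj x - zstep tau = x - zstep tau - proj x by rewrite addrAC.
  rewrite /dist2.
  exact: ((Hproj (x - zstep tau)).2 (proj x) (Hproj x).1).
split; last first.
  rewrite /h; have := mulr_gt0 eta1 kpos; lra.
set eta := 2 * delta - delta ^+ 2.
set d2 := dist2 proj x.
pose f tau := pospart (resid A b x (sel tau)).
pose g i := pospart (resid A b x i) ^+ 2.
have key : forall tau, sqnorm (x - proj x - zstep tau) <= d2 - eta * f tau ^+ 2.
  move=> tau; rewrite /zstep sqnorm_sub_scale HA dotvB.
  have Hp := (Hproj x).1 (sel tau).
  move: Hp; rewrite /f /eta /d2 /dist2 /resid /pospart.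
  set r := dotv (row (sel tau) A) x; set rp := dotv (row (sel tau) A) (proj x).
  set bb := b (sel tau) 0 => Hp.
  have [hr|hr] := lerP 0 (r - bb).
    have Hq : 0 <= bb - rp by lra.
    have := mulr_ge0 (mulr_ge0 (ltW Hd0) hr) Hq.
    rewrite !expr2; nra.
  rewrite !expr2; nra.
set T := \sum_(tau : {set 'I_m} | #|tau| == beta) sqnorm (x - proj x - zstep tau).
set S := \sum_(tau : {set 'I_m} | #|tau| == beta) f tau ^+ 2.
have HT : T <= C%:R * d2 - eta * S.
  apply: le_trans (ler_sum _ (fun tau _ => key tau)) _.
  rewrite sumrB -mulr_sumr sumr_const /C cardsE mulr_natl.
  exact: lexx.
pose N := Ncnt beta i0.
pose V := viol2 A b x.
have HS : N%:R * V <= beta%:R * S.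
  have E1 : N%:R * V = \sum_(tau : {set 'I_m} | #|tau| == beta) \sum_(i in tau) g i.
    rewrite sum_in_tau /V /viol2 mulr_sumr; apply: eq_bigr => i _.
    by rewrite /N (@Ncnt_const m beta i i0) mulrC.
  rewrite E1 /S mulr_sumr; apply: ler_sum => tau /eqP Ht.
  have [Hin Hmax] := Hsel tau Ht.
  apply: (@le_trans _ _ (\sum_(i in tau) f tau ^+ 2)).
    apply: ler_sum => i Hi; rewrite /g /f !expr2.
    by apply: ler_pM; rewrite ?pospart_ge0 ?Hmax.
  by rewrite sumr_const Ht mulr_natl.
have HN : (m%:R : R) * N%:R = beta%:R * C%:R.
  rewrite -!natrM; congr (_%:R); rewrite -Ncnt_sum.
  transitivity (\sum_(i < m) N)%N; last first.
    by apply: eq_bigr => i _; rewrite /N (@Ncnt_const m beta i i0).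
  by rewrite sum_nat_const card_ord.
have Hd : d2 <= L ^+ 2 * V := Hhoff x.
have V0 : 0 <= V by rewrite /V /viol2 sumr_ge0 // => i _; rewrite exprn_ge0 // pospart_ge0.
have H1 : C%:R * V <= S * m%:R.
  rewrite -(ler_pM2l bR).
  have := mulr_ge0 (ltW mR) (ltW_helper HS).
  have -> : beta%:R * (C%:R * V) = m%:R * N%:R * V by rewrite HN mulrA.
  nra.
have L2 : 0 < L ^+ 2 by rewrite exprn_gt0.
have H2 : C%:R * d2 <= S * (m%:R * L ^+ 2).
  apply: (@le_trans _ _ (C%:R * (L ^+ 2 * V))).
    by rewrite ler_wpM2l // ltW.
  have := ler_wpM2r (ltW L2) H1.
  have -> : C%:R * V * L ^+ 2 = C%:R * (L ^+ 2 * V) by ring.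
  by have -> : S * m%:R * L ^+ 2 = S * (m%:R * L ^+ 2) by ring.
set k := 1 / (m%:R * L ^+ 2).
have Hk : C%:R * d2 * k <= S.
  rewrite /k mulrA mulr1 ler_pdivrMr //; last by rewrite mulr_gt0.
have := mulr_ge0 eta0 (ltW_helper Hk).
rewrite /Esamp -/T ler_pdivrMr // /h -/eta -/k.
nra.
Qed.
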